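(* For every integer $k\ge 8$, the Hasse diagram (directed graph of the cover relation) of $TW_k$ has clique-width at least $\lceil k/13\rceil$.
   Context: For an integer $k\ge3$, $TW_k$ (''trunk with woodpeckers'') is the order on the elements $t_0,\dots,t_{k-1}$ together with one element $w_{a,b}$ for each pair of integers $0\le a$, $b\le k-1$ with $b\ge a+2$, whose order relation is: $t_j<t_l$ iff $j<l$; $t_j<w_{a,b}$ iff $j\le a$; $w_{a,b}<t_j$ iff $j\ge b$; $w_{a,b}<w_{c,d}$ iff $b\le c$; all other pairs are incomparable. It has $\frac{k^2-k}{2}+1$ elements; its covering pairs are $t_j\lessdot t_{j+1}$, $t_a\lessdot w_{a,b}$ and $w_{a,b}\lessdot t_b$. ($x$ is covered by $y$ if $x<y$ and no $z$ satisfies $x<z<y$.) Clique-width is the standard notion (minimum number of labels in a clique-width expression). *)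

(* Defs.v *)
From mathcomp Require Import all_boot.
Set Implicit Arguments. Unset Strict Implicit. Unset Printing Implicit Defensive.

(* Labels are natural numbers; an expression "uses at most n labels"   *)
(* when every label occurring in it is < n.                            *)
Inductive cwexp (V : Type) :=
  | CWVert of V & nat
  | CWUnion of cwexp V & cwexp V
  | CWArc of nat & nat & cwexp V
  | CWRelab of nat & nat & cwexp V.

Section CW.
Variable V : eqType.

Fixpoint cw_verts (e : cwexp V) : seq V :=
  match e with
  | CWVert v _ => [:: v]
  | CWUnion e1 e2 => cw_verts e1 ++ cw_verts e2
  | CWArc _ _ e1 => cw_verts e1
  | CWRelab _ _ e1 => cw_verts e1
  end.

Fixpoint cw_lab (e : cwexp V) (v : V) : nat :=
  match e with
  | CWVert _ i => i
  | CWUnion e1 e2 => if v \in cw_verts e1 then cw_lab e1 v else cw_lab e2 v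
  | CWArc _ _ e1 => cw_lab e1 v
  | CWRelab i j e1 => if cw_lab e1 v == i then j else cw_lab e1 v
  end.

Fixpoint cw_arc (e : cwexp V) (u v : V) : bool :=
  match e with
  | CWVert _ _ => false
  | CWUnion e1 e2 => cw_arc e1 u v || cw_arc e2 u v
  | CWArc i j e1 =>
      cw_arc e1 u v ||
      [&& u \in cw_verts e1, v \in cw_verts e1, cw_lab e1 u == i & cw_lab e1 v == j]
  | CWRelab _ _ e1 => cw_arc e1 u v
  end.

Fixpoint cw_wf (e : cwexp V) : bool :=
  match e with
  | CWVert _ _ => true
  | CWUnion e1 e2 => [&& cw_wf e1, cw_wf e2 & uniq (cw_verts e1 ++ cw_verts e2)]
  | CWArc i j e1 => (i != j) && cw_wf e1
  | CWRelab _ _ e1 => cw_wf e1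
  end.

Fixpoint cw_labels_lt (n : nat) (e : cwexp V) : bool :=
  match e with
  | CWVert _ i => i < n
  | CWUnion e1 e2 => cw_labels_lt n e1 && cw_labels_lt n e2
  | CWArc i j e1 => [&& i < n, j < n & cw_labels_lt n e1]
  | CWRelab i j e1 => [&& i < n, j < n & cw_labels_lt n e1]
  end.
End CW.

Definition cw_at_most (T : finType) (E : rel T) (n : nat) : Prop :=
  exists e : cwexp T,
    [/\ cw_wf e, cw_labels_lt n e,
        (forall v : T, v \in cw_verts e) &
        (forall u v : T, cw_arc e u v = E u v)].

(* The order TW_k (trunk with woodpeckers).                             *)
(* inl j      stands for t_j        (0 <= j <= k-1)                      *)
(* inr (a,b)  stands for w_{a,b}    (0 <= a, b <= k-1, b >= a+2)         *)
Definition tw_valid (k : nat) (x : 'I_k + ('I_k * 'I_k)) : bool :=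
  match x with
  | inl _ => true
  | inr (a, b) => a.+2 <= b
  end.

Definition tw_elt (k : nat) := {x : 'I_k + ('I_k * 'I_k) | tw_valid x}.

Definition tw_lt_raw (k : nat) (x y : 'I_k + ('I_k * 'I_k)) : bool :=
  match x, y with
  | inl j, inl l => j < l
  | inl j, inr (a, _) => j <= a
  | inr (_, b), inl j => b <= j
  | inr (_, b), inr (c, _) => b <= c
  end.

Definition tw_lt (k : nat) (x y : tw_elt k) : bool := tw_lt_raw (val x) (val y).

Definition tw_cover (k : nat) (x y : tw_elt k) : bool :=
  tw_lt x y && [forall z : tw_elt k, ~~ (tw_lt x z && tw_lt z y)].

(* Main.v *)
Require Import Defs.
From mathcomp Require Import all_boot zify.
Set Implicit Arguments. Unset Strict Implicit. Unset Printing Implicit Defensive.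

Section CWgen.
Variable V : eqType.

Fixpoint cw_sub (f e : cwexp V) : Prop :=
  f = e \/ match e with
  | CWVert _ _ => False
  | CWUnion e1 e2 => cw_sub f e1 \/ cw_sub f e2
  | CWArc _ _ e1 => cw_sub f e1
  | CWRelab _ _ e1 => cw_sub f e1 end.

Lemma arc_verts (e : cwexp V) u v : cw_arc e u v -> (u \in cw_verts e) && (v \in cw_verts e).
Proof.
elim: e => [x i|e1 IH1 e2 IH2|i j e1 IH|i j e1 IH] //=.
- rewrite !mem_cat; case/orP => [/IH1|/IH2] /andP[-> ->]; by rewrite ?orbT.
- case/orP => [/IH //|/and4P[-> -> _ _] //].
Qed.

Lemma arc_nin1 (e : cwexp V) x y : x \notin cw_verts e -> cw_arc e x y = false.
Proof. by move=> h; apply/negbTE/negP => /arc_verts/andP[h1 _]; rewrite h1 in h. Qed.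
Lemma arc_nin2 (e : cwexp V) x y : y \notin cw_verts e -> cw_arc e x y = false.
Proof. by move=> h; apply/negbTE/negP => /arc_verts/andP[_ h1]; rewrite h1 in h. Qed.

Lemma lab_lt n (e : cwexp V) v : cw_labels_lt n e -> v \in cw_verts e -> cw_lab e v < n.
Proof.
elim: e => [x i|e1 IH1 e2 IH2|i j e1 IH|i j e1 IH] /=.
- by move=> ? _.
- move=> /andP[h1 h2]; rewrite mem_cat; case: ifP => [hv _|hv /orP[h|h]].
  + exact: IH1.
  + by rewrite h in hv.
  + exact: IH2.
- by move=> /and3P[_ _ h] hv; apply: IH.
- move=> /and3P[hi hj h] hv; case: ifP => // _; exact: IH.
Qed.

Lemma sub_lt n (f e : cwexp V) : cw_sub f e -> cw_labels_lt n e -> cw_labels_lt n f.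
Proof.
elim: e => [x i|e1 IH1 e2 IH2|i j e1 IH|i j e1 IH] /= [-> //|].
- by [].
- case=> h /andP[h1 h2]; [exact: IH1 h h1|exact: IH2 h h2].
- move=> h /and3P[_ _ h1]; exact: IH h h1.
- move=> h /and3P[_ _ h1]; exact: IH h h1.
Qed.

Lemma disj (s1 s2 : seq V) x : uniq (s1 ++ s2) -> x \in s1 -> x \notin s2.
Proof.
rewrite cat_uniq => /and3P[_ /hasPn h _] hx; apply/negP => hx2.
by move: (h x hx2); rewrite /= hx.
Qed.
Lemma disj' (s1 s2 : seq V) x : uniq (s1 ++ s2) -> x \in s2 -> x \notin s1.
Proof.
rewrite cat_uniq => /and3P[_ /hasPn h _] hx; exact: h.
Qed.

Lemma sep (f e : cwexp V) u v w : cw_sub f e -> cw_wf e ->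
  u \in cw_verts f -> v \in cw_verts f -> cw_lab f u = cw_lab f v -> w \notin cw_verts f ->
  [/\ u \in cw_verts e, v \in cw_verts e, cw_lab e u = cw_lab e v,
      cw_arc e u w = cw_arc e v w & cw_arc e w u = cw_arc e w v].
Proof.
move=> + + hu hv hl hw.
elim: e => [x i|e1 IH1 e2 IH2|i j e1 IH|i j e1 IH] hs hwf;
  (case: hs => [<-|hs]; first by split=> //;
     rewrite ?(arc_nin1 u hw) ?(arc_nin1 v hw) ?(arc_nin2 u hw) ?(arc_nin2 v hw)).
- by [].
- move: hwf => /= /and3P[w1 w2 hu12]; case: hs => hs.
  + have [u1 v1 l1 a1 a2] := IH1 hs w1.
    have nu2 := disj hu12 u1; have nv2 := disj hu12 v1.
    rewrite !mem_cat u1 v1 /= l1 a1 a2 (arc_nin1 w nu2) (arc_nin1 w nv2)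
      (arc_nin2 w nu2) (arc_nin2 w nv2); by split.
  + have [u1 v1 l1 a1 a2] := IH2 hs w2.
    have nu2 := disj' hu12 u1; have nv2 := disj' hu12 v1.
    rewrite !mem_cat u1 v1 /= (negbTE nu2) (negbTE nv2) l1 a1 a2 (arc_nin1 w nu2) (arc_nin1 w nv2)
      (arc_nin2 w nu2) (arc_nin2 w nv2) !orbT; by split.
- move: hwf => /= /andP[_ w1].
  have [u1 v1 l1 a1 a2] := IH hs w1.
  by rewrite /= u1 v1 l1 a1 a2; split.
- move: hwf => /= w1.
  have [u1 v1 l1 a1 a2] := IH hs w1.
  by rewrite /= l1 a1 a2; split.
Qed.
End CWgen.

Section TW.
Variable k : nat.

Definition ttv (j : 'I_k) : tw_elt k := @exist _ (fun x => tw_valid x) (inl j) isT.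

Definition cov_raw (x y : 'I_k + ('I_k * 'I_k)) : bool :=
  match x, y with
  | inl j, inl l => nat_of_ord l == (nat_of_ord j).+1
  | inl j, inr (a, _) => nat_of_ord j == nat_of_ord a
  | inr (_, b), inl j => nat_of_ord j == nat_of_ord b
  | inr _, inr _ => false
  end.

Lemma cover_raw (x y : tw_elt k) : tw_cover x y = cov_raw (val x) (val y).
Proof.
apply/idP/idP.
- case: x => [[j|[a b]] hx]; case: y => [[l|[c d]] hy];
  rewrite /tw_cover /tw_lt /= => /andP[hlt /forallP hz]; rewrite /=.
  + case: (ltnP j.+1 l) => h; last by lia.
    have hk : j.+1 < k by apply: ltn_trans h (ltn_ord l).
    move: (hz (ttv (Ordinal hk))); rewrite /= => /negP[]; apply/andP; split => //=.
  + case: (ltnP j c) => h; last by lia.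
    move: (hz (ttv c)); rewrite /= => /negP[]; apply/andP; split => //=.
  + case: (ltnP b l) => h; last by lia.
    move: (hz (ttv b)); rewrite /= => /negP[]; apply/andP; split => //=.
  + move: (hz (ttv b)); rewrite /= => /negP[]; apply/andP; split => //=.
- case: x => [[j|[a b]] hx]; case: y => [[l|[c d]] hy];
  rewrite /tw_cover => h; apply/andP; (split; [rewrite /tw_lt /= in hx hy h |- *; lia|
    apply/forallP => -[[m|[p q]] hz]; rewrite /tw_lt /= in hx hy hz h |- *; lia]).
Qed.

Definition wp (a b : 'I_k) : tw_elt k :=
  insubd (ttv a) (inr (if a < b then (a, b) else (b, a))).

Definition nadj (a b : 'I_k) : bool := ((nat_of_ord a).+1 == b) || ((nat_of_ord b).+1 == a).

Lemma val_wp (a b : 'I_k) : nat_of_ord a != nat_of_ord b -> ~~ nadj a b ->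
  val (wp a b) = inr (if a < b then (a, b) else (b, a)).
Proof.
move=> h1 h2; rewrite /wp val_insubd /nadj in h2 *.
case: ifP => // /negP[]; case: ifP => /= h; lia.
Qed.

Definition adj (x y : tw_elt k) := tw_cover x y || tw_cover y x.

Lemma L1 (a b : 'I_k) : nat_of_ord a != nat_of_ord b -> ~~ nadj a b -> adj (ttv a) (wp a b).
Proof.
move=> h1 h2; rewrite /adj !cover_raw val_wp //=; rewrite /nadj in h2.
case: ifP => /= h; lia.
Qed.
Lemma L2 (a b : 'I_k) : nat_of_ord a != nat_of_ord b -> ~~ nadj a b -> adj (wp a b) (ttv b).
Proof.
move=> h1 h2; rewrite /adj !cover_raw val_wp //=; rewrite /nadj in h2.
case: ifP => /= h; lia.
Qed.
Lemma L3 (a a' b' : 'I_k) : nat_of_ord a' != nat_of_ord b' -> ~~ nadj a' b' -> nat_of_ord a != nat_of_ord a' -> nat_of_ord a != nat_of_ord b' ->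
  ~~ adj (ttv a) (wp a' b').
Proof.
move=> h1 h2 h3 h4; rewrite /adj !cover_raw val_wp //=; rewrite /nadj in h2.
case: ifP => /= h; lia.
Qed.
Lemma L4 (a b : 'I_k) : ~~ nadj a b -> ~~ adj (ttv a) (ttv b).
Proof. move=> h; rewrite /adj !cover_raw /= /nadj in h *; lia. Qed.
Lemma L5 (a b a' b' : 'I_k) : nat_of_ord a != nat_of_ord b -> ~~ nadj a b -> nat_of_ord a' != nat_of_ord b' -> ~~ nadj a' b' ->
  ~~ adj (wp a b) (wp a' b').
Proof.
move=> h1 h2 h3 h4; rewrite /adj !cover_raw !val_wp //=.
by case: ifP; case: ifP.
Qed.
Lemma L6 (a' b' b : 'I_k) : nat_of_ord a' != nat_of_ord b' -> ~~ nadj a' b' -> nat_of_ord b != nat_of_ord a' -> nat_of_ord b != nat_of_ord b' ->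
  ~~ adj (wp a' b') (ttv b).
Proof.
move=> h1 h2 h3 h4; rewrite /adj !cover_raw val_wp //=; rewrite /nadj in h2.
case: ifP => /= h; lia.
Qed.
End TW.

Section Sel.
Variable k : nat.

Definition Tset (f : cwexp (tw_elt k)) := [set j : 'I_k | ttv j \in cw_verts f].

Lemma ttv_inj : injective (@ttv k).
Proof. move=> a b /(congr1 val) /= [] //. Qed.

Lemma exists_mid m : 1 < m -> forall e, m <= #|Tset e| ->
  exists f, cw_sub f e /\ m <= #|Tset f| <= (m-1)+(m-1).
Proof.
move=> hm; elim=> [v i|e1 IH1 e2 IH2|i j e1 IH|i j e1 IH] hc.
- have : 1 < #|Tset (CWVert v i)| by lia.
  move=> /card_gt1P[x [y [hx hy hxy]]].
  rewrite !inE in hx hy.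
  by case/negP: hxy; apply/eqP/ttv_inj; rewrite (eqP hx) (eqP hy).
- have hU : Tset (CWUnion e1 e2) = Tset e1 :|: Tset e2.
    by apply/setP => j; rewrite !inE /= mem_cat.
  case: (leqP m #|Tset e1|) => h1.
    by have [f [hs hf]] := IH1 h1; exists f; split => //; right; left.
  case: (leqP m #|Tset e2|) => h2.
    by have [f [hs hf]] := IH2 h2; exists f; split => //; right; right.
  exists (CWUnion e1 e2); split; first by left.
  have := leq_card_setU (Tset e1) (Tset e2); rewrite -hU => -[h _]; lia.
- have [f [hs hf]] := IH hc; exists f; split => //; by right.
- have [f [hs hf]] := IH hc; exists f; split => //; by right.
Qed.

Lemma nb_card (b : 'I_k) : #|[set a : 'I_k | nadj a b]| <= 2.
Proof.
have -> : [set a : 'I_k | nadj a b] =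
   [set a : 'I_k | (nat_of_ord a).+1 == b] :|: [set a : 'I_k | (nat_of_ord b).+1 == a].
  by apply/setP => a; rewrite !inE.
have le1 : forall P : nat -> bool, (forall x y, P x -> P y -> x = y) ->
   #|[set a : 'I_k | P a]| <= 1.
  move=> P hP; rewrite leqNgt; apply/negP => /card_gt1P[x [y [hx hy hxy]]].
  rewrite !inE in hx hy; move/negP: hxy; apply; apply/eqP/val_inj; exact: hP.
have := leq_card_setU [set a : 'I_k | (nat_of_ord a).+1 == b] [set a : 'I_k | (nat_of_ord b).+1 == a].
case=> h _.
have h1 := le1 (fun a => a.+1 == b) ltac:(move=> x y /eqP + /eqP; lia).
have h2 := le1 (fun a => (nat_of_ord b).+1 == a) ltac:(move=> x y /eqP + /eqP; lia).
lia.
Qed.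

Definition Sp (S : {set 'I_k}) (bs : seq 'I_k) :=
  [set a in S | all (fun b => ~~ nadj a b) bs].

Lemma card_Sp (S : {set 'I_k}) (bs : seq 'I_k) : #|S| - 2 * size bs <= #|Sp S bs|.
Proof.
elim: bs => [|b bs IH].
  have -> : Sp S [::] = S by apply/setP => a; rewrite !inE andbT.
  lia.
have -> : Sp S (b :: bs) = Sp S bs :\: [set a | nadj a b].
  by apply/setP => a; rewrite !inE /= andbCA andbA andbC.
rewrite cardsD.
have := subset_leq_card (subsetIr (Sp S bs) [set a | nadj a b]).
have : #|[set a | nadj a b]| <= 2 := nb_card b.
set X := #|[set a | nadj a b]|; set Y := #|_ :&: _|. move=> h1 h2. rewrite [size _]/=. lia.
Qed.
End Sel.

Theorem lemma7p2 (k : nat) (hk : 8 <= k) (n : nat) :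
  cw_at_most (@tw_cover k) n -> (k + 12) %/ 13 <= n.
Proof.
case=> e [hwf hlt hall harc].
set N := (k + 12) %/ 13.
have [hN1 hN7] : 1 <= N /\ 7 * N <= k + 2 by rewrite /N; lia.
have k0 : 0 < k by lia.
have hTe : #|Tset e| = k.
  have -> : Tset e = setT by apply/setP => j; rewrite !inE hall.
  by rewrite cardsT card_ord.
have [f [hsub /andP[hf1 hf2]]] := @exists_mid k (3 * N) ltac:(lia) e ltac:(lia).
set S := Tset f.
set U := ~: S.
have hU : N <= #|U|. have := cardsC S; rewrite card_ord; move: hf2; rewrite -/S; set s := #|S|; set u := #|U|; move=> *; lia.
set bs := take N (enum U).
have hbs : size bs = N by rewrite size_takel // -cardE.
have ubs : uniq bs by apply/take_uniq/enum_uniq.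
set Sq := Sp S bs.
have hSq : N <= #|Sq| by have := card_Sp S bs; rewrite hbs; move: hf1; rewrite -/S -/Sq; set s := #|S|; set u := #|Sq|; move=> *; lia.
set as_ := take N (enum Sq).
have has : size as_ = N by rewrite size_takel // -cardE.
have uas : uniq as_ by apply/take_uniq/enum_uniq.
set a0 : 'I_k := Ordinal k0.
set a := fun i => nth a0 as_ i.
set b := fun i => nth a0 bs i.
have aSq : forall i, i < N -> a i \in Sq.
  move=> i hi; rewrite -mem_enum; apply: (@mem_take N); apply: mem_nth; by rewrite has.
have bU : forall i, i < N -> b i \in U.
  move=> i hi; rewrite -mem_enum; apply: (@mem_take N); apply: mem_nth; by rewrite hbs.
have aS : forall i, i < N -> ttv (a i) \in cw_verts f.
  by move=> i /aSq; rewrite !inE => /andP[].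
have bS : forall i, i < N -> ttv (b i) \notin cw_verts f.
  by move=> i /bU; rewrite !inE.
have hnadj : forall i j, i < N -> j < N -> ~~ nadj (a i) (b j).
  move=> i j hi hj; move: (aSq i hi); rewrite !inE => /andP[_ /allP]; apply.
  apply: mem_nth; by rewrite hbs.
have hab : forall i j, i < N -> j < N -> nat_of_ord (a i) != nat_of_ord (b j).
  move=> i j hi hj; apply/negP => /eqP h.
  have h' : a i = b j by apply: val_inj.
  by move: (aS i hi) (bS j hj); rewrite h' => ->.
have haa : forall i j, i < N -> j < N -> i != j -> nat_of_ord (a i) != nat_of_ord (a j).
  move=> i j hi hj hij; apply/negP => /eqP h.
  have h' : a i = a j by apply: val_inj.
  move: h'; rewrite /a => /eqP; rewrite nth_uniq ?has //; exact/negP.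
have hbb : forall i j, i < N -> j < N -> i != j -> nat_of_ord (b i) != nat_of_ord (b j).
  move=> i j hi hj hij; apply/negP => /eqP h.
  have h' : b i = b j by apply: val_inj.
  move: h'; rewrite /b => /eqP; rewrite nth_uniq ?hbs //; exact/negP.
set x := fun i => if wp (a i) (b i) \in cw_verts f then wp (a i) (b i) else ttv (a i).
set d := fun i => if wp (a i) (b i) \in cw_verts f then ttv (b i) else wp (a i) (b i).
have hx : forall i, i < N -> x i \in cw_verts f.
  move=> i hi; rewrite /x; case: ifP => // _; exact: aS.
have hd : forall i, i < N -> d i \notin cw_verts f.
  move=> i hi; rewrite /d; case: ifP => [_|/negbT //]; exact: bS.
have hadj : forall i, i < N -> adj (x i) (d i).
  move=> i hi; rewrite /x /d; case: ifP => _.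
    exact: L2 (hab i i hi hi) (hnadj i i hi hi).
  exact: L1 (hab i i hi hi) (hnadj i i hi hi).
have hnadj2 : forall i j, i < N -> j < N -> i != j -> ~~ adj (x j) (d i).
  move=> i j hi hj hij; rewrite /x /d; case: ifP => _; case: ifP => _.
  - apply: L6 (hab j j hj hj) (hnadj j j hj hj) _ _.
    + by rewrite eq_sym; apply: hab.
    + by apply: hbb.
  - exact: L5 (hab j j hj hj) (hnadj j j hj hj) (hab i i hi hi) (hnadj i i hi hi).
  - apply: L4; exact: hnadj.
  - apply: L3 (hab i i hi hi) (hnadj i i hi hi) _ _.
    + by apply: haa; rewrite // eq_sym.
    + exact: hab.
have hlabn : forall i j, i < N -> j < N -> cw_lab f (x i) = cw_lab f (x j) -> i = j.
  move=> i j hi hj hl; apply/eqP; apply/negPn/negP => hij.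
  have [_ _ _ a1 a2] := sep hsub hwf (hx i hi) (hx j hj) hl (hd i hi).
  have := hadj i hi; have := hnadj2 i j hi hj hij.
  by rewrite /adj -!harc a1 a2 => /negP.
set L := map (fun i => cw_lab f (x i)) (iota 0 N).
have uL : uniq L.
  rewrite map_inj_in_uniq ?iota_uniq // => i j; rewrite !mem_iota /= !add0n.
  exact: hlabn.
have sL : {subset L <= iota 0 n}.
  move=> l /mapP[i]; rewrite mem_iota /= add0n => hi ->.
  rewrite mem_iota /= add0n; apply: lab_lt; [exact: sub_lt hsub hlt|exact: hx].
have := uniq_leq_size uL sL; by rewrite size_map !size_iota.
Qed.
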